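(* Let $m>0$, $h\ge0$ and $\theta>0$, and let $g(u)=\bar\Psi_{m+h}\big(\theta\,\bar\Psi_m^{-1}(u)\big)$ for $u\in(0,1)$. If $\theta\le1$, then $g$ is concave on $(0,1)$; if $\theta>1$ and $h=0$, then $g$ is convex on $(0,1)$.
   Context: $\Psi_k$ denotes the CDF of the (central) chi-squared distribution with $k$ degrees of freedom, $\bar\Psi_k=1-\Psi_k$ its survival function, and $\bar\Psi_k^{-1}:(0,1)\to(0,\infty)$ the inverse of $\bar\Psi_k$. *)

(* Defs.v *)
From HB Require Import structures.
From mathcomp Require Import all_boot all_order all_algebra.
From mathcomp Require Import all_classical all_reals all_analysis.
Set Implicit Arguments. Unset Strict Implicit. Unset Printing Implicit Defensive.
Import Order.TTheory GRing.Theory Num.Theory.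
Local Open Scope classical_set_scope.
Local Open Scope ring_scope.

Section Chi2.
Variable R : realType.

Definition chi2_kernel (k t : R) : R := powR t (k / 2 - 1) * expR (- t / 2).

(* survival function  bar Psi_k(x) = P(chi^2_k > x)
   = (int_{max x 0}^oo kernel) / (int_0^oo kernel); the normalising
   integral equals 2^(k/2) Gamma(k/2). *)
Definition chi2_sf (k x : R) : R :=
  fine (\int[@lebesgue_measure R]_(t in `](Num.max x 0), +oo[) (chi2_kernel k t)%:E)
  / fine (\int[@lebesgue_measure R]_(t in `]0, +oo[) (chi2_kernel k t)%:E).

Definition chi2_cdf (k x : R) : R := 1 - chi2_sf k x.

(* inverse of the survival function on (0,1): the (unique) x > 0 with
   bar Psi_k(x) = u *)
Definition chi2_sf_inv (k u : R) : R :=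
  xget 0 [set x : R | 0 < x /\ chi2_sf k x = u].

Definition concave_on_01 (g : R -> R) : Prop :=
  forall x y t : R, 0 < x < 1 -> 0 < y < 1 -> 0 <= t <= 1 ->
    t * g x + (1 - t) * g y <= g (t * x + (1 - t) * y).

Definition convex_on_01 (g : R -> R) : Prop :=
  forall x y t : R, 0 < x < 1 -> 0 < y < 1 -> 0 <= t <= 1 ->
    g (t * x + (1 - t) * y) <= t * g x + (1 - t) * g y.

End Chi2.

(* Main.v *)
Require Import Defs.
From HB Require Import structures.
From mathcomp Require Import all_boot all_order all_algebra.
From mathcomp Require Import all_classical all_reals all_analysis.
From mathcomp Require Import measurable_realfun exponential_distribution.
From mathcomp Require Import lra ring.
Import Order.TTheory GRing.Theory Num.Theory.
Import numFieldNormedType.Exports.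
Local Open Scope ring_scope.
Local Open Scope classical_set_scope.
Section S0.
Context {R : realType}.
Lemma is_derive_scale (f : R -> R) (c x df : R) :
  is_derive (c * x) 1 f df -> is_derive x 1 (fun y => f (c * y)) (c * df).
Proof.
move=> [fd fv].
have hd : derivable (fun y => c * y) x 1.
  by apply: ex_derive; apply: is_deriveZ.
have hd2 : derivable (f \o (fun y => c * y)) x 1.
  apply/derivable1_diffP; apply: differentiable_comp.
    exact/derivable1_diffP.
  exact/derivable1_diffP.
split; first exact: hd2.
rewrite -derive1E.
have fd' : derivable f ((fun y => c * y) x) 1 := fd.
rewrite (derive1_comp hd fd').
rewrite derive1E fv derive1E.
have := @is_deriveZ R R R id c x 1 1 _.
move=> [_ ->]; rewrite mulrC; congr (_ * _); exact: mulr1.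
Qed.
End S0.
Section S.
Context {R : realType}.
Notation mu := (@lebesgue_measure R).

Lemma ftc_seg (f F : R -> R) (a b : R) : 0 < a -> a < b ->
  (forall x : R, 0 < x -> is_derive x 1 F (f x)) ->
  (forall x : R, 0 < x -> {for x, continuous f}) ->
  (\int[mu]_(x in `[a, b]) (f x)%:E = (F b)%:E - (F a)%:E)%E.
Proof.
move=> a0 ab dF cf.
have cF x : 0 < x -> {for x, continuous F}.
  move=> x0; apply: differentiable_continuous; apply/derivable1_diffP.
  by case: (dF x x0).
apply: continuous_FTC2 => //.
- apply: continuous_in_subspaceT => x; rewrite inE /= in_itv /= => /andP[ax _].
  by apply: cf; apply: lt_le_trans ax.
- split.
  + move=> x; rewrite in_itv /= => /andP[ax _].
    by case: (dF x (lt_trans a0 ax)).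
  + by apply: cvg_at_right_filter; apply: cF.
  + by apply: cvg_at_left_filter; apply: cF; apply: lt_trans ab.
- move=> x; rewrite in_itv /= => /andP[ax _].
  have [_ <-] := dF x (lt_trans a0 ax).
  by rewrite derive1E.
Qed.

End S.
Section S2.
Context {R : realType}.
Notation mu := (@lebesgue_measure R).

Lemma pow_deriv (a x : R) : 0 < x -> -1 < a ->
  is_derive x 1 (fun t => (a + 1)^-1 * powR t (a + 1)) (powR x a).
Proof.
move=> x0 a1.
have h := @is_derive1_powR R (a + 1) x x0.
have := is_deriveZ ((a + 1)^-1) h.
move=> H; apply: is_derive_eq H _.
rewrite /GRing.scale /= mulrA mulVf ?mul1r ?addrK //.
by rewrite gt_eqF // -ltrBlDr sub0r.
Qed.

Lemma int_pow01 (a : R) : -1 < a ->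
  (\int[mu]_(t in `]0%R, 1%R]) (powR t a)%:E <= ((a + 1)^-1)%:E)%E.
Proof.
move=> a1.
have a10 : 0 < a + 1 by rewrite -ltrBlDr sub0r.
pose F (n : nat) : set R := `[(n.+2%:R)^-1, 1].
have nndF : nondecreasing_seq F.
  apply/nondecreasing_seqP => n; rewrite subsetEset /F; apply: subset_itvr; rewrite bnd_simp.
  by rewrite lef_pV2 ?posrE // ler_nat.
have mF i : measurable (F i) by exact: measurable_itv.
have mf i : measurable_fun (F i) (fun t => (powR t a)%:E).
  by apply/measurable_EFinP; apply: measurable_funTS; apply: measurable_powR.
have f0 i x : F i x -> (0 <= (powR x a)%:E)%E by rewrite lee_fin powR_ge0.
have := ge0_nondecreasing_set_cvg_integral (mu := mu) nndF mF mf f0.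
have -> : \bigcup_n F n = `]0, 1].
  apply/seteqP; split => x.
    move=> [n _]; rewrite /F /= !in_itv /= => /andP[h ->]; rewrite andbT.
    by apply: lt_le_trans h.
  rewrite /= in_itv /= => /andP[x0 x1].
  have [n hn] : exists n : nat, x^-1 < n.+2%:R.
    exists (Num.truncn (x^-1)).
    apply: lt_trans (Num.Theory.truncnS_gt _) _.
    by rewrite ltr_nat.
  exists n => //; rewrite /F /= in_itv /= x1 andbT.
  by rewrite -(invrK x) lef_pV2 ?posrE ?invr_gt0 // ltW.
move=> cv; rewrite -(cvg_lim _ cv) //; apply: lime_le; first by apply/cvg_ex; eexists; exact: cv.
apply: nearW => n.
have e0 : 0 < (n.+2%:R)^-1 :> R by rewrite invr_gt0.
have e1 : (n.+2%:R)^-1 < 1 :> R by rewrite invf_lt1 // ltr1n.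
have dd : forall x : R, 0 < x -> is_derive x 1 (fun t => (a + 1)^-1 * powR t (a + 1)) (powR x a).
  by move=> x x0; apply: pow_deriv.
have cc : forall x : R, 0 < x -> {for x, continuous (fun t => powR t a)}.
  move=> x x0; apply: differentiable_continuous; apply/derivable1_diffP.
  by apply: derivable_powR; rewrite in_itv /= andbT.
rewrite /F (@ftc_seg R (fun t => powR t a) (fun t => (a + 1)^-1 * powR t (a + 1)) _ _ e0 e1 dd cc).
rewrite powR1 -EFinD lee_fin mulr1 lerBlDr lerDl.
by rewrite mulr_ge0 // ?powR_ge0 // invr_ge0 ltW.
Qed.

End S2.
Section S3.
Context {R : realType}.
Notation mu := (@lebesgue_measure R).

Lemma K_gt0' (k t : R) : 0 < t -> 0 < chi2_kernel k t.
Proof. by move=> t0; rewrite /chi2_kernel mulr_gt0 ?powR_gt0 ?expR_gt0. Qed.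

Lemma K_ge0' (k t : R) : 0 <= chi2_kernel k t.
Proof. by rewrite /chi2_kernel mulr_ge0 ?powR_ge0 ?expR_ge0. Qed.

Lemma K_exp' (k t : R) : 0 < t ->
  chi2_kernel k t = expR ((k / 2 - 1) * ln t - t / 2).
Proof.
move=> t0; rewrite /chi2_kernel /powR gt_eqF // -expRD; congr expR.
by rewrite mulNr.
Qed.

Definition cst_k (k : R) := (`|k / 2 - 1| + 1) * ln (4 * (`|k / 2 - 1| + 1)).

Lemma K_le_exp (k t : R) : 1 < t -> chi2_kernel k t <= expR (cst_k k - t / 4).
Proof.
move=> t1; have t0 : 0 < t by apply: lt_trans t1.
rewrite K_exp' // ler_expR /cst_k.
set a := k / 2 - 1; set b := `|a| + 1.
have b0 : 0 < b by rewrite /b ltr_wpDl.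
have lt0 : 0 <= ln t by apply: ln_ge0; apply: ltW.
have h1 : a * ln t <= b * ln t.
  by apply: ler_wpM2r => //; rewrite /b (le_trans (ler_norm a)) // lerDl.
have h4b : 0 < 4 * b by rewrite mulr_gt0.
have h2 : ln t = ln (t / (4 * b)) + ln (4 * b).
  by rewrite ln_div ?posrE // subrK.
have h3 : ln (t / (4 * b)) < t / (4 * b).
  by apply: ln_sublinear; rewrite divr_gt0.
have h5 : b * ln (t / (4 * b)) <= t / 4.
  have -> : t / 4 = b * (t / (4 * b)).
    by field; rewrite gt_eqF.
  by apply: ler_wpM2l; [apply: ltW | apply: ltW].
have h6 : b * ln t = b * ln (t / (4 * b)) + b * ln (4 * b) by rewrite {1}h2 mulrDr.
lra.
Qed.

End S3.
Section S4.
Context {R : realType}.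
Notation mu := (@lebesgue_measure R).

Lemma mK' (k : R) : measurable_fun setT (chi2_kernel k).
Proof.
apply: measurable_funM; first exact: measurable_powR.
apply: measurableT_comp; first exact: measurable_expR.
by apply: measurable_funM => //; apply: measurableT_comp.
Qed.

Lemma int_head (k : R) : 0 < k ->
  (\int[mu]_(t in `]0%R, 1%R]) (chi2_kernel k t)%:E < +oo)%E.
Proof.
move=> k0.
have a1 : -1 < k / 2 - 1 by rewrite ltrBrDr addrC subrr divr_gt0.
apply: (le_lt_trans _ (ltry ((k / 2 - 1 + 1)^-1))).
have hp := @int_pow01 R _ a1. apply: le_trans hp.
apply: ge0_le_integral => //.
- by move=> t _; rewrite lee_fin K_ge0'.
- by apply/measurable_EFinP; apply: measurable_funTS; apply: mK'.
- by apply/measurable_EFinP; apply: measurable_funTS; apply: measurable_powR.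
move=> t; rewrite /= in_itv /= => /andP[t0 _]; rewrite lee_fin /chi2_kernel.
rewrite ler_piMr ?powR_ge0 // expR_le1 mulNr oppr_le0 divr_ge0 //.
exact: ltW.
Qed.

Lemma int_tail (k : R) :
  (\int[mu]_(t in `]1%R, +oo[) (chi2_kernel k t)%:E < +oo)%E.
Proof.
set M := 4 * expR (cst_k k).
have q0 : (0:R) <= 4^-1 by rewrite invr_ge0.
have q1 : (0:R) < 4^-1 by rewrite invr_gt0.
apply: (le_lt_trans _ (ltry M)).
apply: (@le_trans _ _ (\int[mu]_(t in `]1%R, +oo[) (M%:E * (exponential_pdf (4^-1) t)%:E))%E).
  apply: ge0_le_integral => //.
  - by move=> t _; rewrite lee_fin K_ge0'.
  - by apply/measurable_EFinP; apply: measurable_funTS; apply: mK'.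
  - apply/measurable_EFinP; apply: measurable_funTS.
    by apply: measurable_funM => //; apply: measurable_exponential_pdf.
  move=> t; rewrite /= in_itv /= andbT => t1.
  rewrite -EFinM lee_fin exponential_pdfE; last by apply: ltW; apply: lt_trans t1.
  have -> : M * (4^-1 * expR (- 4^-1 * t)) = expR (cst_k k - t / 4).
    rewrite /M mulrCA mulrA [4^-1 * (4 * _)]mulrA mulVf // mul1r -expRD.
    by rewrite mulNr mulrC.
  exact: K_le_exp.
rewrite ge0_integralZl_EFin //; last first.
  by rewrite /M mulr_ge0 // expR_ge0.
  by apply/measurable_EFinP; apply: measurable_funTS; apply: measurable_exponential_pdf.
  by move=> t _; rewrite lee_fin; apply: exponential_pdf_ge0.
rewrite -[leRHS]mule1 lee_wpmul2l //; first by rewrite lee_fin /M mulr_ge0 // expR_ge0.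
rewrite -(integral_exponential_pdf q1).
apply: ge0_subset_integral => //.
- by apply/measurable_EFinP; apply: measurable_exponential_pdf.
- by move=> t _; rewrite lee_fin; apply: exponential_pdf_ge0.
Qed.

End S4.
Section S5.
Context {R : realType}.
Notation mu := (@lebesgue_measure R).

Lemma setU01 : `]0%R, +oo[%classic = `]0%R, 1%R] `|` `]1%R, +oo[ :> set R.
Proof.
by rewrite -itv_bndbnd_setU // bnd_simp.
Qed.

Lemma intK (k : R) : 0 < k -> mu.-integrable `]0%R, +oo[ (EFin \o chi2_kernel k).
Proof.
move=> k0; apply/integrableP; split.
  by apply/measurable_EFinP; apply: measurable_funTS; apply: mK'.
have -> : (fun t => `|(EFin \o chi2_kernel k) t|%E) = (fun t => (chi2_kernel k t)%:E).
  by apply: funext => t /=; rewrite ger0_norm ?K_ge0'.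
rewrite setU01 ge0_integral_setU //.
- by rewrite lte_add_pinfty // ?int_head // int_tail.
- by apply/measurable_EFinP; apply: measurable_funTS; apply: mK'.
- by move=> t _; rewrite lee_fin K_ge0'.
- apply/disj_setPS => y [/=]; rewrite 2!in_itv/= => /andP[_ yx] /andP[].
  by rewrite ltNge yx.
Qed.

End S5.
Section S5b.
Context {R : realType}.
Lemma cK' (k t : R) : 0 < t -> {for t, continuous (fun s : R => chi2_kernel k s)}.
Proof.
move=> t0; apply: continuousM.
  apply: differentiable_continuous; apply/derivable1_diffP.
  by apply: derivable_powR; rewrite in_itv /= andbT.
apply: continuous_comp; last exact: continuous_expR.
apply: continuousM; [apply: continuousN; exact: cvg_id| exact: cvg_cst].
Qed.
End S5b.
Section S6.
Context {R : realType}.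
Notation mu := (@lebesgue_measure R).

Definition Zk (k : R) := (\int[mu]_(t in `]0%R, +oo[) chi2_kernel k t)%R.
Definition Gk (k y : R) := (\int[mu]_(t in `]0%R, y]) chi2_kernel k t)%R.

Lemma sfE (k y : R) : 0 < k -> 0 < y -> chi2_sf k y = (Zk k - Gk k y) / Zk k.
Proof.
move=> k0 y0; rewrite /chi2_sf /Zk /Gk.
have -> : Num.max y 0 = y by rewrite max_l // ltW.
congr (_ / _).
rewrite (@Rintegral_itvB R _ (BRight 0) (BInfty R false) y) //.
- exact: (@intK R k k0).
- by rewrite bnd_simp ltW.
Qed.

Lemma G_deriv (k x : R) : 0 < k -> 0 < x -> is_derive x 1 (Gk k) (chi2_kernel k x).
Proof.
move=> k0 x0.
have xu : x < x + 1 by rewrite ltrDl.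
have iu : mu.-integrable [set` Interval (BRight 0) (BRight (x + 1))] (EFin \o chi2_kernel k).
  apply: (integrableS _ _ _ (@intK R k k0)) => //.
  by apply: subset_itvl; rewrite bnd_simp.
have ax : (BRight (0:R) < BRight x)%O by rewrite bnd_simp.
have [d1 d2] := @continuous_FTC1 R (chi2_kernel k) (BRight 0) x (x + 1) xu iu ax (@cK' R k x x0).
split; first exact: d1.
by rewrite -derive1E.
Qed.

End S6.
Section S7.
Context {R : realType}.
Notation mu := (@lebesgue_measure R).

Lemma mvt_pos (f df : R -> R) (a b : R) : 0 < a -> a < b ->
  (forall x : R, 0 < x -> is_derive x 1 f (df x)) ->
  exists2 c, c \in `]a, b[%R & f b - f a = df c * (b - a).
Proof.
move=> a0 ab df_.
apply: MVT => //.
- move=> x; rewrite in_itv /= => /andP[ax _]; apply: df_.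
  exact: lt_trans ax.
- apply: derivable_within_continuous => x; rewrite in_itv /= => /andP[ax _].
  by case: (df_ x (lt_le_trans a0 ax)).
Qed.

Lemma Zpos (k : R) : 0 < k -> 0 < Zk k.
Proof.
move=> k0.
have l12 : (1:R) < 2 by rewrite ltr1n.
have [c] := @mvt_pos (Gk k) (chi2_kernel k) 1 2 ltr01 l12
  (fun x x0 => @G_deriv R k x k0 x0).
rewrite in_itv /= => /andP[c1 c2] hG.
have g1 : 0 <= Gk k 1 by apply: Rintegral_ge0 => t _; apply: K_ge0'.
have g2 : 0 <= Zk k - Gk k 2.
  rewrite /Zk /Gk (@Rintegral_itvB R _ (BRight 0) (BInfty R false) (2:R)) //.
  - by apply: Rintegral_ge0 => t _; apply: K_ge0'.
  - exact: (@intK R k k0).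
  - by rewrite bnd_simp.
have kc : 0 < chi2_kernel k c by apply: K_gt0'; apply: lt_trans c1.
have h3 : 0 < Gk k 2 - Gk k 1 by rewrite hG mulr_gt0 // subr_gt0.
have h4 : Gk k 1 < Gk k 2 by rewrite -subr_gt0.
have h5 : Gk k 2 <= Zk k by rewrite -subr_ge0.
exact: (le_lt_trans g1 (lt_le_trans h4 h5)).
Qed.

Lemma sf_deriv (k x : R) : 0 < k -> 0 < x ->
  is_derive x 1 (chi2_sf k) (- chi2_kernel k x / Zk k).
Proof.
move=> k0 x0.
pose g := (Zk k)^-1 *: (cst (Zk k) - Gk k).
have dg : is_derive x 1 g ((Zk k)^-1 *: (0 - chi2_kernel k x)).
  apply: is_deriveZ; apply: is_deriveB; exact: G_deriv.
apply: (@near_eq_is_derive _ _ _ g).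
  near=> y.
  rewrite sfE //; last by near: y; exact: lt_nbhsr.
  by rewrite /g /= mulrC.
apply: is_derive_eq dg _.
by rewrite sub0r /GRing.scale /= mulrC mulNr.
Unshelve. all: by end_near.
Qed.

End S7.
Section S8.
Context {R : realType}.
Notation mu := (@lebesgue_measure R).

Lemma exists_gt (k v : R) (F : nat -> set R) : 0 < k -> nondecreasing_seq F ->
  (forall i, measurable (F i)) -> \bigcup_n F n = `]0%R, +oo[ -> v < Zk k ->
  exists n, (v%:E < \int[mu]_(t in F n) (chi2_kernel k t)%:E)%E.
Proof.
move=> k0 nndF mF UF vZ.
have mf i : measurable_fun (F i) (fun t => (chi2_kernel k t)%:E).
  by apply/measurable_EFinP; apply: measurable_funTS; apply: mK'.
have f0 i x : F i x -> (0 <= (chi2_kernel k x)%:E)%E by rewrite lee_fin K_ge0'.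
have cv := ge0_nondecreasing_set_cvg_integral (mu := mu) nndF mF mf f0.
have nd : nondecreasing_seq (fun i => \int[mu]_(x in F i) (chi2_kernel k x)%:E)%E.
  exact: ge0_nondecreasing_set_nondecreasing_integral.
have cv2 := ereal_nondecreasing_cvgn nd.
have E : (\int[mu]_(x in \bigcup_i F i) (chi2_kernel k x)%:E)%E =
         ereal_sup (range (fun i => \int[mu]_(x in F i) (chi2_kernel k x)%:E))%E.
  by rewrite -(cvg_lim _ cv) // -(cvg_lim _ cv2).
rewrite UF in E.
have fZ : (\int[mu]_(x in `]0%R, +oo[) (chi2_kernel k x)%:E)%E = (Zk k)%:E.
  rewrite /Zk /Rintegral fineK //; exact: integrable_fin_num (@intK R k k0).
have : (v%:E < ereal_sup (range (fun i => \int[mu]_(x in F i) (chi2_kernel k x)%:E)))%E.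
  by rewrite -E fZ lte_fin.
move=> /ereal_sup_gt [y [n _ <-]] hv.
by exists n.
Qed.

End S8.
Section S9.
Context {R : realType}.
Notation mu := (@lebesgue_measure R).

Lemma ivt_pos (f : R -> R) (p q u : R) : 0 < p -> p <= q ->
  (forall x : R, 0 < x -> derivable f x 1) ->
  (f q <= u /\ u <= f p) \/ (f p <= u /\ u <= f q) -> exists c, 0 < c /\ f c = u.
Proof.
move=> p0 pq df h2.
have cf : {within `[p, q], continuous f}.
  apply: derivable_within_continuous => x; rewrite in_itv /= => /andP[px _].
  exact: df (lt_le_trans p0 px).
have hm : Num.min (f p) (f q) <= u <= Num.max (f p) (f q).
  case: h2 => [[h1 h2]|[h2 h3]]; apply/andP; split.
  - by rewrite ge_min h1 orbT.
  - by rewrite le_max h2.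
  - by rewrite ge_min h2.
  - by rewrite le_max h3 orbT.
have [c] := IVT pq cf hm.
rewrite in_itv /= => /andP[pc _] fc.
by exists c; split => //; apply: lt_le_trans pc.
Qed.

Lemma sf_def (k y : R) : chi2_sf k y =
  fine (\int[mu]_(t in `](Num.max y 0), +oo[) (chi2_kernel k t)%:E) / Zk k.
Proof. by []. Qed.

Lemma fin_int (k : R) (A : set R) : 0 < k -> measurable A -> A `<=` `]0%R, +oo[ ->
  (\int[mu]_(t in A) (chi2_kernel k t)%:E)%E \is a fin_num.
Proof.
move=> k0 mA sA.
have h : mu.-integrable A (EFin \o chi2_kernel k).
  by apply: (integrableS _ _ _ (@intK R k k0)).
apply: (integrable_fin_num _ h). exact: mA.
Qed.

Lemma sf_inv_ex (m u : R) : 0 < m -> 0 < u -> u < 1 ->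
  exists x, 0 < x /\ chi2_sf m x = u.
Proof.
move=> m0 u0 u1.
have Z0 := @Zpos R m m0.
pose Fa (n : nat) : set R := `](n.+1%:R)^-1, +oo[.
have ndFa : nondecreasing_seq Fa.
  apply/nondecreasing_seqP => n; rewrite subsetEset /Fa; apply: subset_itvr.
  by rewrite bnd_simp lef_pV2 ?posrE // ler_nat.
have mFa i : measurable (Fa i) by exact: measurable_itv.
have UFa : \bigcup_n Fa n = `]0%R, +oo[.
  apply/seteqP; split => x.
    move=> [n _]; rewrite /Fa /= !in_itv /= !andbT => h.
    by apply: lt_trans h.
  rewrite /= in_itv /= andbT => x0.
  have [n hn] : exists n : nat, x^-1 < n.+1%:R.
    by exists (Num.truncn (x^-1)); apply: Num.Theory.truncnS_gt.
  exists n => //; rewrite /Fa /= in_itv /= andbT.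
  by rewrite -(invrK x) ltf_pV2 ?posrE ?invr_gt0.
have uZ : u * Zk m < Zk m by rewrite gtr_pMl.
have [na hna] := @exists_gt R m _ _ m0 ndFa mFa UFa uZ.
set a := (na.+1%:R)^-1 : R.
have a0 : 0 < a by rewrite invr_gt0.
have fa : u <= chi2_sf m a.
  rewrite sf_def (_ : Num.max a 0 = a); last by rewrite max_l // ltW.
  rewrite ler_pdivlMr //.
  have fn := @fin_int m (Fa na) m0 (mFa na) (ltac:(by rewrite -UFa; exact: bigcup_sup)).
  rewrite -(fineK fn) lte_fin in hna.
  exact: ltW.
pose Fb (n : nat) : set R := `]0, n.+1%:R].
have ndFb : nondecreasing_seq Fb.
  apply/nondecreasing_seqP => n; rewrite subsetEset /Fb; apply: subset_itvl.
  by rewrite bnd_simp ler_nat.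
have mFb i : measurable (Fb i) by exact: measurable_itv.
have UFb : \bigcup_n Fb n = `]0%R, +oo[.
  apply/seteqP; split => x.
    by move=> [n _]; rewrite /Fb /= !in_itv /= andbT => /andP[].
  rewrite /= in_itv /= andbT => x0.
  exists (Num.truncn x) => //; rewrite /Fb /= in_itv /= x0 /=.
  exact: ltW (Num.Theory.truncnS_gt _).
have uZ' : (1 - u) * Zk m < Zk m by rewrite gtr_pMl // ltrBlDr ltrDl.
have [nb hnb] := @exists_gt R m _ _ m0 ndFb mFb UFb uZ'.
set b := nb.+1%:R : R.
have b0 : 0 < b by rewrite ltr0n.
have fb : chi2_sf m b <= u.
  rewrite sfE // ler_pdivrMr //.
  have fn := @fin_int m (Fb nb) m0 (mFb nb) (ltac:(by rewrite -UFb; exact: bigcup_sup)).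
  rewrite -(fineK fn) lte_fin in hnb.
  have : (1 - u) * Zk m < Gk m b by [].
  lra.
have dsf : forall x : R, 0 < x -> derivable (chi2_sf m) x 1.
  by move=> x x0; case: (@sf_deriv R m x m0 x0).
case: (leP a b) => ab.
  by apply: (@ivt_pos _ a b u a0 ab dsf); left.
by apply: (@ivt_pos _ b a u b0 (ltW ab) dsf); right.
Qed.

Lemma sf_inv_spec (m u : R) : 0 < m -> 0 < u -> u < 1 ->
  0 < chi2_sf_inv m u /\ chi2_sf m (chi2_sf_inv m u) = u.
Proof.
move=> m0 u0 u1; rewrite /chi2_sf_inv.
by have := xgetPex 0 (@sf_inv_ex m u m0 u0 u1).
Qed.

End S9.
Section S10.
Context {R : realType}.
Notation mu := (@lebesgue_measure R).

Lemma concave_of_slopes (g : R -> R) :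
  (forall x w y : R, 0 < x -> x < w -> w < y -> y < 1 ->
     (g y - g w) * (w - x) <= (g w - g x) * (y - w)) -> concave_on_01 g.
Proof.
move=> H x y t /andP[x0 x1] /andP[y0 y1] /andP[t0 t1].
have [->|tn0] := eqVneq t 0.
  by rewrite !mul0r !subr0 !add0r !mul1r.
have [->|tn1] := eqVneq t 1.
  by rewrite subrr !mul0r !addr0 !mul1r.
set w := t * x + (1 - t) * y.
have t0' : 0 < t by rewrite lt_neqAle eq_sym tn0.
have t1' : t < 1 by rewrite lt_neqAle tn1.
case: (ltgtP x y) => xy.
- have xw : x < w by rewrite /w; nra.
  have wy : w < y by rewrite /w; nra.
  have := H x w y x0 xw wy y1.
  rewrite /w => h1; nra.
- have yw : y < w by rewrite /w; nra.
  have wx : w < x by rewrite /w; nra.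
  have := H y w x y0 yw wx x1.
  rewrite /w => h1; nra.
- by rewrite /w xy -!mulrDl subrKC !mul1r.
Qed.

Lemma convex_of_slopes (g : R -> R) :
  (forall x w y : R, 0 < x -> x < w -> w < y -> y < 1 ->
     (g w - g x) * (y - w) <= (g y - g w) * (w - x)) -> convex_on_01 g.
Proof.
move=> H x y t /andP[x0 x1] /andP[y0 y1] /andP[t0 t1].
have [->|tn0] := eqVneq t 0.
  by rewrite !mul0r !subr0 !add0r !mul1r.
have [->|tn1] := eqVneq t 1.
  by rewrite subrr !mul0r !addr0 !mul1r.
set w := t * x + (1 - t) * y.
have t0' : 0 < t by rewrite lt_neqAle eq_sym tn0.
have t1' : t < 1 by rewrite lt_neqAle tn1.
case: (ltgtP x y) => xy.
- have xw : x < w by rewrite /w; nra.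
  have wy : w < y by rewrite /w; nra.
  have := H x w y x0 xw wy y1.
  rewrite /w => h1; nra.
- have yw : y < w by rewrite /w; nra.
  have wx : w < x by rewrite /w; nra.
  have := H y w x y0 yw wx x1.
  rewrite /w => h1; nra.
- by rewrite /w xy -!mulrDl subrKC !mul1r.
Qed.

End S10.
Section S11.
Context {R : realType}.
Variables (m h th : R).
Hypotheses (hm : 0 < m) (hh : 0 <= h) (hth : 0 < th).

Let hmh : 0 < m + h. Proof. by rewrite ltr_wpDr. Qed.

Definition PP (x : R) := chi2_sf (m + h) (th * x).
Definition dP (x : R) := th * (- chi2_kernel (m + h) (th * x) / Zk (m + h)).
Definition dQ (x : R) := - chi2_kernel m x / Zk m.

Lemma dP_is (x : R) : 0 < x -> is_derive x 1 PP (dP x).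
Proof.
move=> x0; apply: is_derive_scale; apply: sf_deriv => //.
exact: mulr_gt0.
Qed.

Lemma dQ_is (x : R) : 0 < x -> is_derive x 1 (chi2_sf m) (dQ x).
Proof. by move=> x0; apply: sf_deriv. Qed.

Lemma cauchy (a b : R) : 0 < a -> a < b -> exists c, a < c < b /\
  (PP b - PP a) * dQ c = (chi2_sf m b - chi2_sf m a) * dP c.
Proof.
move=> a0 ab.
set A := chi2_sf m b - chi2_sf m a; set B := PP b - PP a.
pose phi := A *: PP - B *: chi2_sf m.
have dphi : forall x : R, 0 < x -> is_derive x 1 phi (A *: dP x - B *: dQ x).
  by move=> x x0; apply: is_deriveB; apply: is_deriveZ; [exact: dP_is | exact: dQ_is].
have [c] := @mvt_pos R phi (fun x => A *: dP x - B *: dQ x) a b a0 ab dphi.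
rewrite in_itv /= => /andP[ac cb].
rewrite /phi => e0.
have e : A * PP b - B * chi2_sf m b - (A * PP a - B * chi2_sf m a) =
  (A * dP c - B * dQ c) * (b - a) := e0.
exists c; split; first by rewrite ac cb.
have : (A * dP c - B * dQ c) * (b - a) = 0.
  rewrite -e /A /B; ring.
have ba : b - a != 0 by rewrite subr_eq0 gt_eqF.
move/eqP; rewrite mulf_eq0 (negbTE ba) orbF subr_eq0 => /eqP e1.
by rewrite e1.
Qed.

Lemma Q_strict (a b : R) : 0 < a -> a < b -> chi2_sf m b < chi2_sf m a.
Proof.
move=> a0 ab.
have [c] := @mvt_pos R (chi2_sf m) dQ a b a0 ab dQ_is.
rewrite in_itv /= => /andP[ac cb] e.
rewrite -subr_lt0 e /dQ nmulr_rlt0 ?subr_gt0 //.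
rewrite mulNr oppr_lt0 divr_gt0 //; last exact: Zpos.
by apply: K_gt0'; apply: lt_trans ac.
Qed.

Definition rr (c : R) := (th * Zk m / Zk (m + h)) *
  (chi2_kernel (m + h) (th * c) / chi2_kernel m c).

Definition xi (u : R) := chi2_sf_inv m u.
Definition gg (u : R) := PP (xi u).

Lemma key (u1 u2 : R) : 0 < u1 -> u1 < u2 -> u2 < 1 ->
  exists c, xi u2 < c < xi u1 /\ gg u2 - gg u1 = (u2 - u1) * rr c.
Proof.
move=> u10 u12 u21.
have [x10 q1] := @sf_inv_spec R m u1 hm u10 (lt_trans u12 u21).
have [x20 q2] := @sf_inv_spec R m u2 hm (lt_trans u10 u12) u21.
rewrite -/(xi u1) in x10 q1; rewrite -/(xi u2) in x20 q2.
have x21 : xi u2 < xi u1.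
  case: (ltgtP (xi u2) (xi u1)) => // h21.
    have := @Q_strict (xi u1) (xi u2) x10 h21; rewrite q1 q2 => h'.
    by move: (lt_trans u12 h'); rewrite ltxx.
  by move: u12; rewrite -q1 -q2 h21 ltxx.
have [c [/andP[c2 c1] e]] := @cauchy (xi u2) (xi u1) x20 x21.
exists c; split; first by rewrite c2 c1.
rewrite q1 q2 in e.
rewrite /gg.
have c0 : 0 < c by apply: lt_trans c2.
have Zm := @Zpos R m hm; have Zmh := @Zpos R _ hmh.
have Km := @K_gt0' R m c c0.
have Kmh := @K_gt0' R (m + h) _ (mulr_gt0 hth c0).
have hr : rr c * (chi2_kernel m c / Zk m) = th * (chi2_kernel (m + h) (th * c) / Zk (m + h)).
  rewrite /rr; field.
  by rewrite !gt_eqF.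
have hA : 0 < chi2_kernel m c / Zk m by rewrite divr_gt0.
set A := chi2_kernel m c / Zk m in hr hA.
set B := th * (chi2_kernel (m + h) (th * c) / Zk (m + h)) in hr.
have dQe : dQ c = - A by rewrite /dQ /A mulNr.
have dPe : dP c = - B by rewrite /dP /B mulNr mulrN.
rewrite dQe dPe in e.
have e2 : (PP (xi u2) - PP (xi u1)) * A = (u2 - u1) * B by lra.
rewrite -hr mulrA in e2.
have e3 := mulIf (negbT (gt_eqF hA)) e2.
exact: e3.
Qed.

End S11.
Section S12.
Context {R : realType}.

Lemma ratio_exp (m h th c : R) : 0 < th -> 0 < c ->
  chi2_kernel (m + h) (th * c) / chi2_kernel m c =
  expR (((m + h) / 2 - 1) * (ln th + ln c) - th * c / 2 - ((m / 2 - 1) * ln c - c / 2)).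
Proof.
move=> th0 c0.
rewrite !K_exp' ?mulr_gt0 // -expRB lnM ?posrE //.
Qed.

Lemma rr_mono (m h th c2 c1 : R) : 0 < m -> 0 <= h -> 0 < th -> 0 < c2 -> c2 < c1 ->
  th <= 1 -> rr m h th c2 <= rr m h th c1.
Proof.
move=> m0 h0 th0 c20 c21 th1.
have c10 : 0 < c1 by apply: lt_trans c21.
have mh0 : 0 < m + h by rewrite ltr_wpDr.
rewrite /rr ler_pM2l; last first.
  by rewrite divr_gt0 ?mulr_gt0 ?Zpos.
rewrite !ratio_exp // ler_expR.
have hL : ln c2 <= ln c1 by rewrite ler_ln ?posrE // ltW.
have f1 : 0 <= h * (ln c1 - ln c2) by rewrite mulr_ge0 // subr_ge0.
have f2 : 0 <= (1 - th) * (c1 - c2) by rewrite mulr_ge0 // subr_ge0 // ltW.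
lra.
Qed.

Lemma rr_anti (m th c2 c1 : R) : 0 < m -> 1 < th -> 0 < c2 -> c2 < c1 ->
  rr m 0 th c1 <= rr m 0 th c2.
Proof.
move=> m0 th1 c20 c21.
have th0 : 0 < th by apply: lt_trans th1.
have c10 : 0 < c1 by apply: lt_trans c21.
rewrite /rr ler_pM2l; last first.
  by rewrite divr_gt0 ?mulr_gt0 ?Zpos ?addr0.
rewrite !ratio_exp // ler_expR addr0.
have f2 : 0 <= (th - 1) * (c1 - c2) by rewrite mulr_ge0 // subr_ge0 ltW.
lra.
Qed.

End S12.


Theorem mainTheorem6 (R : realType) (m h theta : R)
  (hm : 0 < m) (hh : 0 <= h) (htheta : 0 < theta) :
  let g := fun u : R => chi2_sf (m + h) (theta * chi2_sf_inv m u) in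
  (theta <= 1 -> concave_on_01 g) /\
  (1 < theta -> h = 0 -> convex_on_01 g).
Proof.
move=> g.
have gE : g = gg m h theta by [].
rewrite gE; split.
- move=> th1; apply: concave_of_slopes => x w y x0 xw wy y1.
  have [c1 [/andP[a1 b1] e1]] := @key R m h theta hm hh htheta x w x0 xw (lt_trans wy y1).
  have [c2 [/andP[a2 b2] e2]] := @key R m h theta hm hh htheta w y (lt_trans x0 xw) wy y1.
  have c20 : 0 < c2.
    apply: lt_trans a2.
    by have [] := @sf_inv_spec R m y hm (lt_trans (lt_trans x0 xw) wy) y1.
  have hr := @rr_mono R m h theta c2 c1 hm hh htheta c20 (lt_trans b2 a1) th1.
  rewrite e1 e2.
  have p : 0 <= (y - w) * (w - x) by rewrite mulr_ge0 // subr_ge0 ltW.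
  rewrite -subr_ge0 in hr.
  have := mulr_ge0 p hr.
  lra.
- move=> th1 h0; subst h.
  apply: convex_of_slopes => x w y x0 xw wy y1.
  have [c1 [/andP[a1 b1] e1]] := @key R m 0 theta hm hh htheta x w x0 xw (lt_trans wy y1).
  have [c2 [/andP[a2 b2] e2]] := @key R m 0 theta hm hh htheta w y (lt_trans x0 xw) wy y1.
  have c20 : 0 < c2.
    apply: lt_trans a2.
    by have [] := @sf_inv_spec R m y hm (lt_trans (lt_trans x0 xw) wy) y1.
  have hr := @rr_anti R m theta c2 c1 hm th1 c20 (lt_trans b2 a1).
  rewrite e1 e2.
  have p : 0 <= (y - w) * (w - x) by rewrite mulr_ge0 // subr_ge0 ltW.
  rewrite -subr_ge0 in hr.
  have := mulr_ge0 p hr.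
  lra.
Qed.
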